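(* A tree $T$ is $\chi_\rho$-critical if and only if it is $\chi_\rho$-vertex-critical.
   Context: A $k$-packing coloring of a graph $G$ is a map $c:V(G)\to\{1,\ldots,k\}$ such that two distinct vertices $u,v$ with $c(u)=c(v)=i$ satisfy $d_G(u,v)>i$ (distance between vertices in different components is infinite); $\chi_\rho(G)$ is the smallest $k$ for which such a coloring exists. $G$ is $\chi_\rho$-critical if $\chi_\rho(H)<\chi_\rho(G)$ for every proper subgraph $H$ of $G$; $G$ is $\chi_\rho$-vertex-critical if $\chi_\rho(G-x)<\chi_\rho(G)$ for every vertex $x\in V(G)$. *)

(* Defs.v *)
From mathcomp Require Import all_boot.
Set Implicit Arguments. Unset Strict Implicit. Unset Printing Implicit Defensive.

Section Packing.
Variable V : finType.

(* A graph is given by a vertex set S : {set V} and an edge relation f : rel V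
   (edges only used between vertices of S).
   dist_le S f i u v  <=>  d_H(u,v) <= i in the graph H = (S, f). *)
Fixpoint dist_le (S : {set V}) (f : rel V) (i : nat) (u v : V) : bool :=
  if i is j.+1 then
    dist_le S f j u v || [exists w, [&& dist_le S f j u w, w \in S, v \in S & f w v]]
  else u == v.

(* a k-packing coloring of H = (S, f): colors in {1,...,k} (value 0 forbidden) and
   two distinct vertices with the same color i are at distance > i *)
Definition packing_colorable (S : {set V}) (f : rel V) (k : nat) : bool :=
  [exists c : {ffun V -> 'I_k.+1},
     [forall u, (u \in S) ==> (0 < c u)] &&
     [forall u, forall v,
        [&& u \in S, v \in S, u != v & c u == c v] ==> ~~ dist_le S f (c u) u v]].

Lemma packing_colorable_card (S : {set V}) (f : rel V) :
  packing_colorable S f #|V|.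
Proof.
apply/existsP.
exists [ffun u => inord (enum_rank u).+1 : 'I_#|V|.+1].
apply/andP; split.
  apply/forallP=> u; apply/implyP=> _; rewrite ffunE inordK //.
  by rewrite ltnS; apply: ltn_ord.
apply/forallP=> u; apply/forallP=> v; apply/implyP=> /and4P[_ _ nuv].
rewrite !ffunE => /eqP/(congr1 val) /=.
rewrite !inordK ?ltnS ?ltn_ord // => -[] Euv.
have /enum_rank_inj Euv' : enum_rank u = enum_rank v by apply: val_inj.
by rewrite Euv' eqxx in nuv.
Qed.

Lemma packing_colorable_ex (S : {set V}) (f : rel V) :
  exists k, packing_colorable S f k.
Proof. by exists #|V|; apply: packing_colorable_card. Qed.

Definition chi_rho (S : {set V}) (f : rel V) : nat :=
  ex_minn (packing_colorable_ex S f).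

Definition subgraph (e : rel V) (S : {set V}) (f : rel V) : Prop :=
  [/\ forall u v, f u v -> e u v,
      forall u v, f u v -> (u \in S) && (v \in S)
    & symmetric f].

Definition proper_subgraph (e : rel V) (S : {set V}) (f : rel V) : Prop :=
  subgraph e S f /\ (S != setT \/ exists u v, e u v && ~~ f u v).

Definition del_vertex_rel (e : rel V) (x : V) : rel V :=
  fun u v => [&& u != x, v != x & e u v].

Definition chi_rho_critical (e : rel V) : Prop :=
  forall S f, proper_subgraph e S f -> chi_rho S f < chi_rho setT e.

Definition chi_rho_vertex_critical (e : rel V) : Prop :=
  forall x : V, chi_rho [set~ x] (del_vertex_rel e x) < chi_rho setT e.

Definition simple_graph (e : rel V) : Prop := symmetric e /\ irreflexive e.

Definition is_tree (e : rel V) : Prop :=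
  [/\ 0 < #|V|,
      forall u v, connect e u v
    & forall c : seq V, uniq c -> 3 <= size c -> ~~ cycle e c].

End Packing.

(* Main.v *)
Require Import Defs.
From mathcomp Require Import all_boot.
Set Implicit Arguments. Unset Strict Implicit. Unset Printing Implicit Defensive.

Section Aux.
Variable V : finType.

Lemma dist_mono (S S' : {set V}) (f f' : rel V) :
  S \subset S' -> (forall a b, f a b -> f' a b) ->
  forall i a b, dist_le S f i a b -> dist_le S' f' i a b.
Proof.
move=> sS sf; elim=> [//|i IH] a b /=.
case/orP=> [H|/existsP[w /and4P[h1 h2 h3 h4]]]; apply/orP; first by left; apply: IH.
right; apply/existsP; exists w.
by rewrite IH // (subsetP sS _ h2) (subsetP sS _ h3) sf.
Qed.

Lemma dist_connect (S : {set V}) f i a b : dist_le S f i a b -> connect f a b.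
Proof.
elim: i b => [|i IH] b /=; first by move/eqP->; apply: connect0.
case/orP=> [/IH//|/existsP[w /and4P[h1 _ _ h4]]].
exact: connect_trans (IH _ h1) (connect1 h4).
Qed.

Lemma chi_col (S : {set V}) f : packing_colorable S f (chi_rho S f).
Proof. by rewrite /chi_rho; case: ex_minnP. Qed.

Lemma chi_min (S : {set V}) f k : packing_colorable S f k -> chi_rho S f <= k.
Proof. by rewrite /chi_rho; case: ex_minnP => m _ H /H. Qed.

Lemma col_mono (S S' : {set V}) (f f' : rel V) k :
  S \subset S' -> (forall a b, f a b -> f' a b) ->
  packing_colorable S' f' k -> packing_colorable S f k.
Proof.
move=> sS sf /existsP[c /andP[/forallP Hp /forallP Hd]].
apply/existsP; exists c; apply/andP; split.
  by apply/forallP=> w; apply/implyP=> wS; apply: (implyP (Hp w)); apply: (subsetP sS).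
apply/forallP=> a; apply/forallP=> b; apply/implyP=> /and4P[aS bS nab cab].
apply/negP=> /(dist_mono sS sf) D.
move: (forallP (Hd a) b); rewrite (subsetP sS _ aS) (subsetP sS _ bS) nab cab /=.
by rewrite D.
Qed.

Lemma chi_mono (S S' : {set V}) (f f' : rel V) :
  S \subset S' -> (forall a b, f a b -> f' a b) -> chi_rho S f <= chi_rho S' f'.
Proof. by move=> sS sf; apply: chi_min; apply: col_mono sS sf (chi_col _ _). Qed.

Section Edge.
Variable e : rel V.
Hypothesis esym : symmetric e.
Hypothesis eirr : irreflexive e.
Hypothesis eacyc : forall c : seq V, uniq c -> 3 <= size c -> ~~ cycle e c.
Variables u v : V.
Hypothesis euv : e u v.

Definition g : rel V := fun x y => e x y && ~~ ((x == u) && (y == v) || (x == v) && (y == u)).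

Lemma g_sym : symmetric g.
Proof.
move=> x y; rewrite /g esym; congr (_ && ~~ _).
by rewrite orbC; congr (_ || _); rewrite andbC.
Qed.

Lemma not_conn : ~~ connect g u v.
Proof.
apply/negP=> /connectP[p0 /shortenP[p pp up _] vE].
have ge : subrel g e by move=> x y /andP[].
have : ~~ cycle e (u :: p).
  apply: eacyc => //.
  case: p pp up vE => [|y [|z p]] //=.
    by move=> _ _ vu; move: euv; rewrite vu eirr.
  move=> /andP[/andP[_ H] _] _ vy; move: H; by rewrite vy /= !eqxx.
rewrite /= rcons_path (sub_path ge pp) /= -vE esym euv.
done.
Qed.

Definition A w := connect g u w.

Lemma F1 i w1 w2 : A w1 -> dist_le setT g i w1 w2 ->
  dist_le [set~ v] (del_vertex_rel e v) i w1 w2.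
Proof.
move=> Aw1; elim: i w2 => [//|i IH] w2 /=.
case/orP=> [/IH->//|/existsP[w /and4P[h1 _ _ h4]]].
have Aw : A w by apply: connect_trans Aw1 (dist_connect h1).
have Aw2 : A w2 by apply: connect_trans Aw (connect1 h4).
have nv : forall x, A x -> x != v.
  by move=> x Ax; apply/eqP=> xv; move: not_conn; rewrite -xv /A in Ax *; rewrite Ax.
apply/orP; right; apply/existsP; exists w.
rewrite IH // !in_setC1 !nv //= /del_vertex_rel !nv //=.
by case/andP: h4.
Qed.

Lemma F2 i w1 w2 : ~~ A w2 -> dist_le setT g i w1 w2 ->
  dist_le [set~ u] (del_vertex_rel e u) i w1 w2.
Proof.
elim: i w2 => [//|i IH] w2 /= nA.
case/orP=> [/IH->//|/existsP[w /and4P[h1 _ _ h4]]].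
have nAw : ~~ A w.
  by apply/negP=> Aw; move: nA; rewrite /A (connect_trans Aw (connect1 h4)).
have nu : forall x, ~~ A x -> x != u.
  by move=> x nAx; apply/eqP=> xu; move: nAx; rewrite xu /A connect0.
apply/orP; right; apply/existsP; exists w.
rewrite IH // !in_setC1 !nu //= /del_vertex_rel !nu //=.
by case/andP: h4.
Qed.

Lemma edge_bound :
  chi_rho setT g <= maxn (chi_rho [set~ v] (del_vertex_rel e v))
                         (chi_rho [set~ u] (del_vertex_rel e u)).
Proof.
set k1 := chi_rho [set~ v] _; set k2 := chi_rho [set~ u] _.
have := chi_col [set~ v] (del_vertex_rel e v); rewrite -/k1.
move=> /existsP[c1 /andP[/forallP P1 /forallP D1]].
have := chi_col [set~ u] (del_vertex_rel e u); rewrite -/k2.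
move=> /existsP[c2 /andP[/forallP P2 /forallP D2]].
apply: chi_min.
pose c : {ffun V -> 'I_(maxn k1 k2).+1} :=
  [ffun w => inord (if A w then (c1 w : nat) else c2 w)].
have cE : forall w, (c w : nat) = if A w then (c1 w : nat) else c2 w.
  move=> w; rewrite ffunE inordK //; case: ifP => _;
  apply: leq_trans (ltn_ord _) _; rewrite ltnS ?leq_maxl ?leq_maxr //.
have nv : forall x, A x -> x != v.
  by move=> x Ax; apply/eqP=> xv; move: not_conn; rewrite -xv /A in Ax *; rewrite Ax.
have nu : forall x, ~~ A x -> x != u.
  by move=> x nAx; apply/eqP=> xu; move: nAx; rewrite xu /A connect0.
apply/existsP; exists c; apply/andP; split.
  apply/forallP=> w; apply/implyP=> _; rewrite cE; case: ifP => Aw.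
    by apply: (implyP (P1 w)); rewrite in_setC1 nv ?Aw.
  by apply: (implyP (P2 w)); rewrite in_setC1 nu ?Aw.
apply/forallP=> a; apply/forallP=> b; apply/implyP=> /and4P[_ _ nab /eqP cab].
apply/negP=> D.
have Cab := dist_connect D.
have cab' : (c a : nat) = c b by rewrite cab.
case Aa : (A a).
  have Ab : A b by apply: connect_trans Cab.
  move: cab'; rewrite !cE Aa Ab => ceq.
  have := F1 Aa D; rewrite cE Aa => D'.
  move: (implyP (forallP (D1 a) b)); rewrite !in_setC1 !nv // nab /=.
  have -> : c1 a == c1 b by apply/eqP/val_inj.
  by move=> /(_ isT); rewrite D'.
have nAb : ~~ A b.
  apply/negP=> Ab; move: Aa; rewrite /A.
  by rewrite (connect_trans Ab) // (sym_connect_sym g_sym).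
move: cab'; rewrite !cE Aa (negbTE nAb) => ceq.
have := F2 nAb D; rewrite cE Aa => D'.
move: (implyP (forallP (D2 a) b)); rewrite !in_setC1 !nu ?Aa // nab /=.
have -> : c2 a == c2 b by apply/eqP/val_inj.
by move=> /(_ isT); rewrite D'.
Qed.

End Edge.
End Aux.

Theorem theorem3p5 (V : finType) (e : rel V) :
  simple_graph e -> is_tree e ->
  (chi_rho_critical e <-> chi_rho_vertex_critical e).
Proof.
move=> [esym eirr] [_ _ eacyc]; split.
  move=> Hc x; apply: Hc; split.
    split.
    - by move=> a b /and3P[].
    - by move=> a b /and3P[a1 b1 _]; rewrite !in_setC1 a1 b1.
    - by move=> a b; rewrite /del_vertex_rel esym; case: (a != x); case: (b != x).
  by left; apply/negP=> /eqP/setP/(_ x); rewrite in_setC1 eqxx in_setT.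
move=> Hv S f [[fe fS fsym] [HS | [a [b /andP[eab nfab]]]]].
  move: HS; rewrite -subTset => /subsetPn[x _ xS].
  apply: leq_ltn_trans (Hv x); apply: chi_mono.
    by apply/subsetP=> y yS; rewrite in_setC1; apply/eqP=> yx; move: xS; rewrite -yx yS.
  move=> y z fyz; case/andP: (fS _ _ fyz) => yS zS; rewrite /del_vertex_rel fe // andbT.
  by apply/andP; split; apply/eqP=> E; move: xS; rewrite -E ?yS ?zS.
apply: (@leq_ltn_trans (chi_rho setT (g e a b))).
  apply: chi_mono; first exact: subsetT.
  move=> y z fyz; rewrite /g fe //=.
  apply/negP=> /orP[/andP[/eqP ya /eqP zb]|/andP[/eqP yb /eqP za]].
    by move: nfab; rewrite -ya -zb fyz.
  by move: nfab; rewrite -yb -za fsym fyz.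
apply: leq_ltn_trans (edge_bound esym eirr eacyc eab) _.
by rewrite gtn_max !Hv.
Qed.
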